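(* Let $\epsilon\in(0,1)$ and let $h>0$ be arbitrary. Then there exists an initial value $u_0\in\mathbb{R}$ such that the sequence $(u_n)_{n\ge 0}$ generated by the explicit Euler scheme $$\frac{u_n-u_{n-1}}{h}+\frac{1}{\epsilon^2}\big(u_{n-1}^3-u_{n-1}\big)=0,\qquad n\ge 1,$$ converges to an incorrect steady state, i.e. $\lim_{n\to\infty}u_n$ exists and $\lim_{n\to\infty}u_n\neq \mathrm{sign}(u_0)$.
   Context: The scheme discretizes the ODE $u'(t)+\frac{1}{\epsilon^2}(u^3-u)=0$, $u(0)=u_0$, whose exact solution converges to $\mathrm{sign}(u_0)\in\{-1,0,1\}$ as $t\to\infty$ (with $\mathrm{sign}(0)=0$). A numerical solution is said to converge to the correct steady state if $\lim_{n\to\infty}u_n=\mathrm{sign}(u_0)$. *)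

(* Defs.v *)
From Stdlib Require Import Reals.
Open Scope R_scope.

Definition sgn (x : R) : R :=
  if Rlt_dec 0 x then 1 else if Rlt_dec x 0 then -1 else 0.

Fixpoint euler_seq (eps h u0 : R) (n : nat) : R :=
  match n with
  | O => u0
  | S m => let v := euler_seq eps h u0 m in v - h / (eps ^ 2) * (v ^ 3 - v)
  end.

(* Main.v *)
Require Import Defs.
From Stdlib Require Import Reals Lra Lia.
Open Scope R_scope.

Theorem lemma2p1 (eps h : R) (Heps0 : 0 < eps) (Heps1 : eps < 1) (Hh : 0 < h) :
  exists u0 : R, exists l : R,
    Un_cv (euler_seq eps h u0) l /\ l <> sgn u0.
Proof.
  set (k := h / eps ^ 2).
  assert (Hk : 0 < k) by (unfold k; apply Rdiv_lt_0_compat; [lra | apply pow_lt; lra]).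
  assert (Hq : 0 < (1 + k) / k) by (apply Rdiv_lt_0_compat; lra).
  set (u0 := sqrt ((1 + k) / k)).
  assert (Hu0 : 0 < u0) by (apply sqrt_lt_R0; exact Hq).
  assert (Hsq : u0 * u0 = (1 + k) / k) by (apply sqrt_sqrt; lra).
  assert (Hz : forall n, euler_seq eps h u0 (S n) = 0).
  { induction n as [|n IH].
    - change (u0 - k * (u0 ^ 3 - u0) = 0).
      replace (u0 - k * (u0 ^ 3 - u0)) with (u0 * (1 + k - k * (u0 * u0))) by ring.
      rewrite Hsq. field; lra.
    - change (euler_seq eps h u0 (S (S n))) with
        (euler_seq eps h u0 (S n) - h / eps ^ 2 * (euler_seq eps h u0 (S n) ^ 3 - euler_seq eps h u0 (S n))).
      rewrite IH. ring. }
  exists u0, 0. split.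
  - intros e He. exists 1%nat. intros n Hn.
    destruct n as [|n]; [lia|]. rewrite Hz. unfold R_dist. rewrite Rminus_0_r, Rabs_R0. exact He.
  - unfold sgn. destruct (Rlt_dec 0 u0); [lra | lra].
Qed.
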